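(* Let $G$ be a finite group. Then $G$ is nested if and only if $K_\infty=G$.
   Context: All groups are finite. For $\chi\in\mathrm{Irr}(G)$, the center of $\chi$ is $Z(\chi)=\{g\in G : |\chi(g)|=\chi(1)\}$; equivalently $Z(\chi)/\ker(\chi)=Z(G/\ker(\chi))$. A group $G$ is nested if for all $\chi,\psi\in\mathrm{Irr}(G)$ either $Z(\chi)\le Z(\psi)$ or $Z(\psi)\le Z(\chi)$. For a nonabelian group $H$, let $\mathcal{X}_H=\{\chi\in\mathrm{Irr}(H) : Z(\chi)>Z(H)\}$ (strict containment) and define $K(H)=\bigcap_{\chi\in\mathcal{X}_H}\ker(\chi)$; if $H$ is abelian, set $K(H)=H$. Define normal subgroups $K_i$ of $G$ by $K_0=1$ and $K_{i+1}/K_{i}=K(G/K_{i})$ for $i\ge 0$. This ascending chain stabilizes; $K_\infty$ denotes its terminal term. *)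

(* Defs.v *)
From mathcomp Require Import all_boot all_order all_algebra all_fingroup all_solvable all_field all_character.
Set Implicit Arguments. Unset Strict Implicit. Unset Printing Implicit Defensive.
Local Open Scope ring_scope.

(* A finite group G is nested if the centers of its irreducible characters are
   totally ordered by inclusion. 'Z(chi)%CF is MathComp's cfcenter, which for a
   character chi is [set g in G | `|chi g| == chi 1]. *)
Definition nested (gT : finGroupType) (G : {group gT}) : bool :=
  [forall i : Iirr G, forall j : Iirr G,
     ('Z('chi_i)%CF \subset 'Z('chi_j)%CF) || ('Z('chi_j)%CF \subset 'Z('chi_i)%CF)].

(* K(H): H if H is abelian; otherwise the intersection of the kernels of the
   irreducible characters chi with Z(chi) > Z(H) (intersected with H, which is
   harmless since kernels lie in H, and gives H for an empty family). *)
Definition Kfun (gT : finGroupType) (H : {group gT}) : {set gT} :=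
  if abelian H then (H : {set gT})
  else (H :&: \bigcap_(i : Iirr H | 'Z(H)%g \proper 'Z('chi_i)%CF) cfker 'chi_i)%g.

(* K_0 = 1, K_{i+1}/K_i = K(G/K_i), i.e. K_{i+1} = preimage of K(G/K_i)
   under the canonical projection G -> G/K_i. *)
Fixpoint Kseq (gT : finGroupType) (G : {group gT}) (n : nat) : {set gT} :=
  match n with
  | 0 => 1%g
  | n'.+1 => (coset (Kseq G n') @*^-1 (Kfun ((G / Kseq G n')%G)))%g
  end.

(* Terminal term of the (ascending, eventually stationary) chain: the chain
   is stationary from index #|G| on. *)
Definition Kinf (gT : finGroupType) (G : {group gT}) : {set gT} :=
  Kseq G #|G|.

(* Main.v *)
Require Import Defs.
From mathcomp Require Import all_boot all_order all_algebra all_fingroup all_solvable all_field all_character.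
Set Implicit Arguments. Unset Strict Implicit. Unset Printing Implicit Defensive.
Local Open Scope ring_scope.

Definition Pn (gT : finGroupType) (G : {group gT}) (N : {set gT}) :=
  forall i j : Iirr G, N \subset cfker 'chi_i -> N \subset cfker 'chi_j ->
    ('Z('chi_i)%CF \subset 'Z('chi_j)%CF) || ('Z('chi_j)%CF \subset 'Z('chi_i)%CF).

Lemma Pn_mono (gT : finGroupType) (G : {group gT}) (N M : {set gT}) :
  N \subset M -> Pn G N -> Pn G M.
Proof.
move=> sNM P i j ki kj; apply: P; exact: subset_trans sNM _.
Qed.

Lemma nested_Pn1 (gT : finGroupType) (G : {group gT}) : nested G <-> Pn G 1%g.
Proof.
split.
  by move=> /forallP H i j _ _; exact: (forallP (H i) j).
move=> P; apply/forallP=> i; apply/forallP=> j; apply: P; exact: sub1G.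
Qed.

Lemma center_sub_cfcenter (gT : finGroupType) (G : {group gT}) (i : Iirr G) :
  'Z(G)%g \subset 'Z('chi_i)%CF.
Proof. by rewrite -cap_cfcenter_irr (bigcap_inf i). Qed.

Lemma Pn_G (gT : finGroupType) (G : {group gT}) : Pn G G.
Proof.
have E: forall i : Iirr G, G \subset cfker 'chi_i -> 'Z('chi_i)%CF = G.
  move=> i k; apply/eqP; rewrite eqEsubset cfcenter_sub /=.
  apply: subset_trans k _; exact: normal_sub (cfker_center_normal _).
by move=> i j ki kj; rewrite (E i ki) (E j kj) subxx.
Qed.

Section Transfer.
Variables (gT : finGroupType) (G K : {group gT}).
Hypothesis nsKG : (K <| G)%g.

Lemma ker_modE (i : Iirr (G / K)) x : x \in G ->
  (x \in cfker 'chi_(mod_Iirr i)) = (coset K x \in cfker 'chi_i).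
Proof.
move=> Gx; rewrite !cfkerEirr !inE mod_IirrE // cfModE // cfMod1.
by [].
Qed.

Lemma Z_modE (i : Iirr (G / K)) x : x \in G ->
  (x \in 'Z('chi_(mod_Iirr i))%CF) = (coset K x \in 'Z('chi_i)%CF).
Proof.
move=> Gx; have GKx : coset K x \in (G / K)%g.
  by rewrite mem_quotient.
by rewrite irr_cfcenterE // irr_cfcenterE // mod_IirrE // cfModE // cfMod1.
Qed.

Lemma quo_elt (y : coset_of K) : y \in (G / K)%g -> exists2 x, x \in G & y = coset K x.
Proof. by case/morphimP=> x _ Gx ->; exists x. Qed.

Lemma pre_in_G (x : gT) : x \in 'N(K)%g -> coset K x \in (G / K)%g -> x \in G.
Proof.
move=> Nx GKx; rewrite -(quotientGK nsKG); exact/morphpreP.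
Qed.

Lemma ZS_mod (i j : Iirr (G / K)) :
  ('Z('chi_(mod_Iirr i))%CF \subset 'Z('chi_(mod_Iirr j))%CF)
  = ('Z('chi_i)%CF \subset 'Z('chi_j)%CF).
Proof.
apply/subsetP/subsetP => H y.
  move=> Zy; have [x Gx Ey] := quo_elt (subsetP (cfcenter_sub _) y Zy).
  move: Zy; rewrite Ey -!(Z_modE _ Gx) //; exact: H.
move=> Zy; have Gy := subsetP (cfcenter_sub _) y Zy.
by move: Zy; rewrite !(Z_modE _ Gy); exact: H.
Qed.

Lemma kerS_mod (A : {set coset_of K}) (i : Iirr (G / K)) :
  A \subset (G / K)%g ->
  ((coset K @*^-1 A)%g \subset cfker 'chi_(mod_Iirr i)) = (A \subset cfker 'chi_i).
Proof.
move=> sA; apply/subsetP/subsetP => H y.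
  move=> Ay; have [x Gx Ey] := quo_elt (subsetP sA y Ay).
  rewrite Ey -ker_modE //; apply: H; apply/morphpreP; split.
    exact: subsetP (normal_norm nsKG) x Gx.
  by move: Ay; rewrite Ey.
case/morphpreP=> Ny Ay; have Gy : y \in G by apply: pre_in_G => //; exact: subsetP sA _ Ay.
by rewrite ker_modE //; apply: H.
Qed.

Lemma Pn_transfer (A : {set coset_of K}) :
  A \subset (G / K)%g -> (1 \in A)%g -> (Pn G (coset K @*^-1 A)%g <-> Pn (G / K)%G A).
Proof.
move=> sA A1; split.
  move=> P i j ki kj; rewrite -!ZS_mod; apply: P; by rewrite kerS_mod.
move=> P i j ki kj.
have sKA : (K \subset coset K @*^-1 A)%g by apply/subsetP=> x Kx; apply/morphpreP; split; [exact: subsetP (normG K) x Kx | by rewrite /= coset_id].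
have Ki := subset_trans sKA ki; have Kj := subset_trans sKA kj.
move: ki kj; rewrite -(quo_IirrK nsKG Ki) -(quo_IirrK nsKG Kj).
rewrite !kerS_mod // !ZS_mod; exact: P.
Qed.

End Transfer.

Section KfunProps.
Variables (hT : finGroupType) (H : {group hT}).

Lemma Kfun_gs : group_set (Kfun H).
Proof. by rewrite /Kfun; case: ifP => _; apply: groupP. Qed.

Lemma Kfun_normal : (Kfun H <| H)%g.
Proof.
rewrite /Kfun; case: ifP => _; first exact: normal_refl.
rewrite /normal subsetIl /= normsI ?normG //.
apply: norms_bigcap; apply/bigcapsP => i _; exact: normal_norm (cfker_normal _).
Qed.

Lemma Kfun_b : Pn H (Kfun H) -> Pn H 1%g.
Proof.
move=> P i j _ _; rewrite /Kfun in P.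
case: ifP P => [abH _ | nab P].
  have E: forall k : Iirr H, 'Z('chi_k)%CF = H.
    move=> k; apply/eqP; rewrite eqEsubset cfcenter_sub /=.
    by rewrite -{1}(center_idP abH) center_sub_cfcenter.
  by rewrite !E subxx.
have [pi | npi] := boolP ('Z(H)%g \proper 'Z('chi_i)%CF); last first.
  have -> : 'Z('chi_i)%CF = 'Z(H)%g.
    apply/eqP; rewrite eq_sym eqEproper center_sub_cfcenter.
    by rewrite (negbTE npi).
  by rewrite center_sub_cfcenter.
have [pj | npj] := boolP ('Z(H)%g \proper 'Z('chi_j)%CF); last first.
  have -> : 'Z('chi_j)%CF = 'Z(H)%g.
    apply/eqP; rewrite eq_sym eqEproper center_sub_cfcenter.
    by rewrite (negbTE npj).
  by rewrite center_sub_cfcenter orbT.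
apply: P; apply: subset_trans (subsetIr _ _) _; exact: bigcap_inf.
Qed.

End KfunProps.

Lemma Kfun_a (hT : finGroupType) (H : {group hT}) :
  Pn H 1%g -> ~~ abelian H -> Kfun H != 1%g.
Proof.
move=> P nab; rewrite /Kfun (negbTE nab).
case: (pickP (fun i : Iirr H => 'Z(H)%g \proper 'Z('chi_i)%CF)) => [i0 pi0 | none]; last first.
  rewrite big_pred0 // setIT; apply: contra nab => /eqP ->; exact: abelian1.
case: (@arg_minnP _ i0 (fun i : Iirr H => 'Z(H)%g \proper 'Z('chi_i)%CF) (fun i => #|'Z('chi_i)%CF|) pi0) => m pm minm.
have subM : forall j : Iirr H, 'Z(H)%g \proper 'Z('chi_j)%CF -> 'Z('chi_m)%CF \subset 'Z('chi_j)%CF.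
  move=> j pj; case/orP: (P m j (sub1G _) (sub1G _)) => // sjm.
  have /eqP <- // : 'Z('chi_j)%CF == 'Z('chi_m)%CF.
  by rewrite eqEcard sjm minm.
move: pm; rewrite properE => /andP[_ nsub].
have [x Zx nZx] := subsetPn nsub.
have Hx : x \in H := subsetP (cfcenter_sub _) x Zx.
have nCx : x \notin 'C(H)%g.
  by apply: contra nZx => cx; rewrite /center inE Hx cx.
move: nCx; rewrite -sub_cent1 => /subsetPn [y Hy nyx].
have nc : ([~ x, y] != 1)%g.
  apply: contra nyx => /commgP cxy; apply/cent1P; exact/esym.
have cK : [~ x, y]%g \in (H :&: \bigcap_(i : Iirr H | 'Z(H)%g \proper 'Z('chi_i)%CF) cfker 'chi_i)%g.
  rewrite inE groupR //=; apply/bigcapP => i pi.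
  have Zxi := subsetP (subM i pi) x Zx.
  set Kc := cfker 'chi_i.
  have nKH : (H \subset 'N(Kc))%g by exact: normal_norm (cfker_normal _).
  have Nx := subsetP nKH x Hx; have Ny := subsetP nKH y Hy.
  have : (coset Kc x \in 'Z(H / Kc))%g.
    by rewrite -cfcenter_eq_center mem_quotient.
  case/setIP => _ /centP cx.
  apply: coset_idr; first by apply: groupR.
  rewrite morphR //; apply/eqP/commgP; apply: cx; exact: mem_quotient.
apply/negP => /eqP E; move: cK; rewrite E inE; exact/negP.
Qed.

Section Main.
Variables (gT : finGroupType) (G : {group gT}).

Lemma step_facts (K : {group gT}) : (K <| G)%g ->
  let S := (coset K @*^-1 Kfun (G / K)%G)%g in
  [/\ group_set S, (S <| G)%g, (K \subset S)%g & (S \subset G)%g].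
Proof.
move=> nsKG S; pose L := Group (Kfun_gs (G / K)%G).
have sLG : (L \subset G / K)%g by exact: normal_sub (Kfun_normal _).
split.
- exact: (groupP (coset K @*^-1 L)%G).
- by rewrite /S -[X in (_ <| X)%g](quotientGK nsKG) cosetpre_normal Kfun_normal.
- by rewrite /S -{1}ker_coset; apply: (ker_sub_pre (coset_morphism K) L).
- by apply: subset_trans (morphpreS _ sLG) _; rewrite quotientGK.
Qed.

Lemma Kseq_facts n : group_set (Kseq G n) && (Kseq G n <| G)%g.
Proof.
elim: n => [|n /andP[gs nsKG]].
  by rewrite /= (groupP 1%G) normal1.
have [gS nSG _ _] := step_facts (K := Group gs) nsKG.
by rewrite /= gS nSG.
Qed.

Lemma Kseq_gs n : group_set (Kseq G n).
Proof. by case/andP: (Kseq_facts n). Qed.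

Lemma Kseq_normal n : (Kseq G n <| G)%g.
Proof. by case/andP: (Kseq_facts n). Qed.

Lemma dir2_step n : Pn G (Kseq G n.+1) -> Pn G (Kseq G n).
Proof.
pose K := Group (Kseq_gs n).
have nsKG : (K <| G)%g := Kseq_normal n.
change (Pn G (coset K @*^-1 Kfun (G / K)%G)%g -> Pn G K).
pose L := Group (Kfun_gs (G / K)%G).
have sLG : (L \subset G / K)%g by exact: normal_sub (Kfun_normal _).
move/(Pn_transfer nsKG sLG (group1 L)) => /Kfun_b.
move/(Pn_transfer nsKG (sub1G _) (group1 _)).
by rewrite cosetpre1.
Qed.

Lemma dir1_step n : Pn G 1%g -> Kseq G n != G -> (Kseq G n \proper Kseq G n.+1)%g.
Proof.
move=> P1 neKG.
pose K := Group (Kseq_gs n).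
have nsKG : (K <| G)%g := Kseq_normal n.
change (K \proper coset K @*^-1 Kfun (G / K)%G)%g.
have [_ _ sKS _] := step_facts nsKG.
have sLG : (Kfun (G / K)%G \subset G / K)%g by exact: normal_sub (Kfun_normal _).
have PK : Pn (G / K)%G 1%g.
  apply/(Pn_transfer nsKG (sub1G _) (group1 _)); rewrite cosetpre1.
  exact: Pn_mono (sub1G _) P1.
have ne1 : Kfun (G / K)%G != 1%g.
  have [ab | nab] := boolP (abelian (G / K)%G); last exact: Kfun_a.
  rewrite /Kfun ab; apply: contra neKG => /eqP E.
  rewrite eqEsubset (normal_sub nsKG) /= -(quotient_sub1 (normal_norm nsKG)).
  by rewrite E.
rewrite properEneq sKS andbT; apply: contra ne1 => /eqP E.
rewrite -(morphpreK (f := coset_morphism K) (R := Kfun (G / K)%G)).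
  by rewrite /= -E; apply/eqP; exact: (trivg_quotient K).
apply: subset_trans sLG _; exact: morphimS (normal_norm nsKG).
Qed.

End Main.

Theorem theoremE (gT : finGroupType) (G : {group gT}) :
  nested G <-> Kinf G = G :> {set gT}.
Proof.
rewrite /Kinf; split.
  move=> /nested_Pn1 P1.
  have C : forall n, Kseq G n = G \/ (n < #|Kseq G n|)%N.
    elim=> [|n IH]; first by right; rewrite /= cards1.
    have [/eqP E | ne] := boolP (Kseq G n == G).
      left; have [_ _ sKS sSG] := step_facts (K := Group (Kseq_gs G n)) (Kseq_normal G n).
      apply/eqP; rewrite eqEsubset sSG /=; apply: subset_trans _ sKS; by rewrite /= E.
    right; case: IH => [E | lt]; first by rewrite E eqxx in ne.
    exact: leq_ltn_trans lt (proper_card (dir1_step P1 ne)).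
  case: (C #|G|) => // lt; exfalso.
  have := subset_leq_card (normal_sub (Kseq_normal G #|G|)).
  by rewrite leqNgt lt.
move=> E; apply/nested_Pn1.
have : Pn G (Kseq G #|G|) by rewrite E; exact: Pn_G.
elim: #|G| => // n IH /dir2_step; exact: IH.
Qed.
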